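(* Let $G$ be a finite group, $\Theta=\sum_{H\le G}n_HH$ a $G$-Brauer relation, and $M$ a finite $\mathbb{Z}[G]$-module. Then \[\frac{\mathcal C_\Theta(M)}{\mathcal C_\Theta(M^\vee)}=\left(\frac{\hat h^{-1}(\Theta,M)}{\hat h^0(\Theta,M)}\right)^2.\]
   Context: Let $G$ be a finite group. A $G$-Brauer relation is a formal sum $\Theta=\sum_{H\le G}n_HH$ over subgroups $H\le G$, $n_H\in\mathbb{Z}$, such that $\bigoplus_{n_H>0}\mathbb{Q}[G/H]^{n_H}\cong\bigoplus_{n_H<0}\mathbb{Q}[G/H]^{-n_H}$ as $\mathbb{Q}[G]$-modules. For a finitely generated $\mathbb{Z}[G]$-module $M$, write $M_{\mathrm{tors}}$ for its $\mathbb{Z}$-torsion subgroup and $M_{\mathrm{tf}}=M/M_{\mathrm{tors}}$. The regulator constant is \[\mathcal C_\Theta(M)=\prod_{H\le G}\Bigl(|M_{\mathrm{tors}}^H|^{-2}\det\bigl(\tfrac{1}{|H|}\langle\cdot,\cdot\rangle|_{(M^H)_{\mathrm{tf}}}\bigr)\Bigr)^{n_H}\in\mathbb{Q}^\times,\] where $\langle\cdot,\cdot\rangle:M\times M\to\mathscr L$ is any $G$-invariant $\mathbb{Z}$-bilinear pairing into a field $\mathscr L\supseteq\mathbb{Q}$ that is non-degenerate on $M_{\mathrm{tf}}$, and the determinant is computed on a $\mathbb{Z}$-basis of $(M^H)_{\mathrm{tf}}$ (the value is independent of the choice of pairing and is positive; for finite $M$ it equals $\prod_H|M^H|^{-2n_H}$).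 For $i\in\mathbb{Z}$ and $H\le G$, $\hat H^i(H,M)$ denotes Tate cohomology, $\hat h^i(H,M)=|\hat H^i(H,M)|$, and $\hat h^i(\Theta,M)=\prod_{H\le G}\hat h^i(H,M)^{n_H}$. For finite $M$, $M^\vee=\mathrm{Hom}(M,\mathbb{Q}/\mathbb{Z})$ with $G$-action $(g\psi)(m)=\psi(g^{-1}m)$. *)

(* Defs.v *)
From HB Require Import structures.
From mathcomp Require Import all_boot all_order all_algebra all_fingroup.
Set Implicit Arguments.
Unset Strict Implicit.
Unset Printing Implicit Defensive.
Import GRing.Theory Num.Theory.

Local Open Scope ring_scope.

Section BrauerDefs.

Variable gT : finGroupType.

(* A formal sum Theta = sum_{H <= G} n_H H is given by a coefficient   *)
(* function n : {group gT} -> int; only subgroups H \subset G count.   *)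

Definition brauer_bound (n : {group gT} -> int) : nat :=
  (\max_(H : {group gT}) absz (n H)).+1.

(* The G-set  X_s = disjoint union over H <= G with sign(n_H) = s of    *)
(* |n_H| copies of G/H (left cosets gH).  An element is a triple        *)
(* (H, k, C) with k < |n_H| the copy index and C a left coset of H in G.*)
Definition in_brauer_gset (G : {group gT}) (n : {group gT} -> int) (pos : bool)
    (x : {group gT} * 'I_(brauer_bound n) * {set gT}) : bool :=
  let: (H, k, C) := x in
  [&& H \subset G, (if pos then (0 < n H)%R else (n H < 0)%R),
      (k < absz (n H))%N & C \in lcosets H G].

Definition brauer_gset (G : {group gT}) (n : {group gT} -> int) (pos : bool) :=
  {x : {group gT} * 'I_(brauer_bound n) * {set gT} | @in_brauer_gset G n pos x}.

Definition brauer_act (n : {group gT} -> int) (g : gT)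
    (x : {group gT} * 'I_(brauer_bound n) * {set gT}) :
    {group gT} * 'I_(brauer_bound n) * {set gT} :=
  let: (H, k, C) := x in (H, k, (g *: C)%g).

(* Q[X_+] ~= Q[X_-] as Q[G]-modules: a Q-linear map Q[X_+] -> Q[X_-],   *)
(* given on the permutation bases by the matrix A (x |-> sum_y A x y y),*)
(* which is G-equivariant and has a two-sided inverse B.               *)
Definition is_brauer_relation (G : {group gT}) (n : {group gT} -> int) : Prop :=
  exists (A : brauer_gset G n true -> brauer_gset G n false -> rat)
         (B : brauer_gset G n false -> brauer_gset G n true -> rat),
    [/\ (forall x x' : brauer_gset G n true,
           \sum_(y : brauer_gset G n false) A x y * B y x' = (x == x')%:R),
        (forall y y' : brauer_gset G n false,
           \sum_(x : brauer_gset G n true) B y x * A x y' = (y == y')%:R) &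
        (forall g, g \in G ->
         forall (x x' : brauer_gset G n true) (y y' : brauer_gset G n false),
           val x' = brauer_act g (val x) -> val y' = brauer_act g (val y) ->
           A x' y' = A x y)].

Definition is_ZG_module (G : {group gT}) (M : finZmodType) (rho : gT -> M -> M)
    : Prop :=
  [/\ (forall g, g \in G -> forall x y : M, rho g (x + y) = rho g x + rho g y),
      (forall x : M, rho 1%g x = x) &
      (forall g h, g \in G -> h \in G -> forall x : M,
          rho (g * h)%g x = rho g (rho h x))].

Variables (M : finZmodType) (rho : gT -> M -> M).

Definition fixM (H : {set gT}) : {set M} :=
  [set m : M | [forall h in H, rho h m == m]].

Definition normimg (H : {set gT}) : {set M} :=
  [set (\sum_(h in H) rho h m)%R | m : M].

Definition normker (H : {set gT}) : {set M} :=
  [set m : M | (\sum_(h in H) rho h m == 0)%R].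

Definition augM (H : {set gT}) : {set M} :=
  <<[set (rho h m - m)%R | h in H, m in [set: M]]>>%g.

Definition tateH0 (H : {set gT}) := (fixM H / normimg H)%g.
Definition tateHm1 (H : {set gT}) := (normker H / augM H)%g.
Definition hhat0 (H : {set gT}) : nat := #|tateH0 H|.
Definition hhatm1 (H : {set gT}) : nat := #|tateHm1 H|.

Definition hhat0_rel (G : {group gT}) (n : {group gT} -> int) : rat :=
  \prod_(H : {group gT} | H \subset G) ((hhat0 H)%:R ^ n H).
Definition hhatm1_rel (G : {group gT}) (n : {group gT} -> int) : rat :=
  \prod_(H : {group gT} | H \subset G) ((hhatm1 H)%:R ^ n H).

(* Regulator constant of a FINITE module: M_tors = M, M_tf = 0, the     *)
(* determinant on the zero lattice is 1, so the factor for H is         *)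
(* |M^H|^{-2}.                                                         *)
Definition regconst_fin (G : {group gT}) (n : {group gT} -> int) : rat :=
  \prod_(H : {group gT} | H \subset G) (((#|fixM H|%:R)^-1 ^+ 2) ^ n H).

(* Pontryagin dual M^v = Hom(M, Q/Z).  Since #|M| * m = 0 for m in M,  *)
(* every homomorphism M -> Q/Z takes values in (1/N)Z/Z, N = #|M|,     *)
(* which we model as Z/NZ = 'I_N (k <-> k/N).                          *)

Definition QZN := 'I_(#|M|.-1.+1).

Definition is_dual_hom (f : {ffun M -> QZN}) : bool :=
  [forall x : M, forall y : M, f (x + y) == (f x + f y)%R].

(* (g psi)(m) = psi(g^{-1} m); invariants of H in M^v *)
Definition dual_fix (H : {set gT}) : {set {ffun M -> QZN}} :=
  [set f | is_dual_hom f && [forall h in H, forall m : M, f (rho h^-1 m) == f m]].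

Definition regconst_dual (G : {group gT}) (n : {group gT} -> int) : rat :=
  \prod_(H : {group gT} | H \subset G) (((#|dual_fix H|%:R)^-1 ^+ 2) ^ n H).

End BrauerDefs.

(* Main.v *)
Require Import Defs.
From HB Require Import structures.
From mathcomp Require Import all_boot all_order all_algebra all_fingroup.
From mathcomp Require Import cyclic zify ring.
Import GRing.Theory Num.Theory FinRing.Theory.
Set Implicit Arguments.
Unset Strict Implicit.
Unset Printing Implicit Defensive.
Local Open Scope ring_scope.
Section ZG.
Variable M : finZmodType.
Implicit Types G : {group M}.
Lemma mem0 G : (0 : M) \in G. Proof. exact: (group1 G). Qed.
Lemma memD G x y : x \in G -> y \in G -> x + y \in G.
Proof. exact: groupM. Qed.
Lemma memN G x : x \in G -> - x \in G.
Proof. exact: groupVr. Qed.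
Lemma memB G x y : x \in G -> y \in G -> x - y \in G.
Proof. by move=> hx hy; rewrite memD ?memN. Qed.
Lemma memMn G x m : x \in G -> x *+ m \in G.
Proof. by move=> hx; rewrite -zmodXgE groupX. Qed.
Lemma memBr G x y : y \in G -> (x - y \in G) = (x \in G).
Proof.
move=> hy; apply/idP/idP => h; last exact: memB.
by rewrite -(subrK y x) memD.
Qed.
Lemma cardM_gt0 : (0 < #|M|)%N.
Proof. by apply/card_gt0P; exists 0. Qed.
Lemma mulrn_card (a : M) : a *+ #|M| = 0.
Proof. by rewrite -zmodXgE -cardsT expg_cardG // inE. Qed.
End ZG.
Lemma count_sol (n k : nat) (x : 'I_n.+1) :
  (k %| n.+1)%N -> (0 < k)%N -> (n.+1 %| x * (n.+1 %/ k))%N ->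
  #|[set t : 'I_n.+1 | t *+ k == x]| = k.
Proof.
move=> kd k0 hx.
set m := (n.+1 %/ k)%N.
have Nkm : n.+1 = (m * k)%N by rewrite divnK.
have m0 : (0 < m)%N by move: Nkm; case: (m) => //.
have kc : (k %| x)%N.
  by move: hx; rewrite {1}Nkm [(x * _)%N]mulnC dvdn_pmul2l.
pose c' := (x %/ k)%N.
have xc : (x : nat) = (c' * k)%N by rewrite divnK.
have c'm : (c' < m)%N.
  by have := ltn_ord x; rewrite xc Nkm ltn_pmul2r.
have key : forall t : 'I_n.+1, (t *+ k == x) = ((t %% m)%N == c').
  move=> t; rewrite Zp_mulrn -val_eqE /=.
  have -> : ((t*k) %% n.+1 = (t*k) %% (m*k))%N by rewrite -Nkm.
  by rewrite -muln_modl xc eqn_pmul2r.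
pose g (i : 'I_k) : 'I_n.+1 := inord (c' + i * m).
have gi : forall i : 'I_k, (c' + i * m < n.+1)%N.
  move=> i; rewrite Nkm; have := ltn_ord i => hi.
  nia.
rewrite -[in RHS](card_ord k) -(card_imset _ (f := g)).
  apply: eq_card => t; rewrite inE key; apply/eqP/imsetP.
    move=> htm; have ht : (t %/ m < k)%N.
      by rewrite ltn_divLR // mulnC -Nkm.
    exists (Ordinal ht) => //; apply: val_inj; rewrite /g /= inordK //.
      by rewrite -htm [RHS]addnC -divn_eq.
    by rewrite -htm [X in (X < _)%N]addnC -divn_eq.
  case=> i _ ->; rewrite /g inordK // addnC modnMDl modn_small //.
move=> i j /(congr1 val); rewrite /g /= !inordK // => /eqP.
rewrite eqn_add2l eqn_pmul2r // => /eqP h; exact: val_inj.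
Qed.

Section Homs.
Variable M : finZmodType.
Local Notation Z := (QZN M).

Definition homs (I B : {set M}) : {set {ffun M -> Z}} :=
  [set f : {ffun M -> Z} | [forall x in B, forall y in B, f (x + y) == f x + f y]
        && [forall x in I, f x == 0] && [forall x in ~: B, f x == 0]].

Lemma homsP (I B : {set M}) (f : {ffun M -> Z}) :
  reflect [/\ {in B &, forall x y, f (x + y) = f x + f y},
              {in I, forall x, f x = 0} & forall x, x \notin B -> f x = 0]
          (f \in homs I B).
Proof.
rewrite inE; apply: (iffP idP).
  case/andP=> /andP[/forallP h1 /forallP h2] /forallP h3; split.
  - by move=> x y hx hy; have := h1 x; rewrite hx => /forallP/(_ y); rewrite hy => /eqP.
  - by move=> x hx; have := h2 x; rewrite hx => /eqP.
  - by move=> x hx; have := h3 x; rewrite inE hx => /eqP.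
case=> h1 h2 h3; apply/andP; split; first (apply/andP; split).
- by apply/forallP => x; apply/implyP => hx; apply/forallP => y; apply/implyP => hy; rewrite h1.
- by apply/forallP => x; apply/implyP => hx; rewrite h2.
- by apply/forallP => x; rewrite inE; apply/implyP => hx; rewrite h3.
Qed.

Lemma hom0 (B : {group M}) (f : {ffun M -> Z}) :
  {in B &, forall x y, f (x + y) = f x + f y} -> f 0 = 0.
Proof.
move=> h; have := h 0 0 (mem0 B) (mem0 B); rewrite addr0 => e.
by apply: (addrI (f 0)); rewrite addr0 -e.
Qed.

Lemma homMn (B : {group M}) (f : {ffun M -> Z}) :
  {in B &, forall x y, f (x + y) = f x + f y} ->
  forall x m, x \in B -> f (x *+ m) = f x *+ m.
Proof.
move=> h x m hx; elim: m => [|m IH]; first by rewrite !mulr0n (hom0 h).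
by rewrite !mulrS h ?memMn // IH.
Qed.


Lemma memDl (G : {group M}) x y : x \in G -> (x + y \in G) = (y \in G).
Proof.
move=> hx; apply/idP/idP => h; last exact: memD.
by rewrite -(addKr x y) memD // memN.
Qed.

Lemma homs_step (I C : {group M}) (a : M) : I \subset C ->
  (#|homs I C| * #|I| = #|C|)%N ->
  (#|homs I (C <*> <[a]>)%G| * #|I| = #|(C <*> <[a]>)%G|)%N.
Proof.
move=> sIC IH.
set B := (C <*> <[a]>)%G.
have BE : (B : {set M}) = (C * <[a]>)%g.
  rewrite /= comm_joingE //; apply: centC; apply/centsP => x _ y _.
  exact: zmod_mulgC.
have memBP : forall x, reflect (exists2 c, c \in C & exists m, x = c + a *+ m) (x \in B).
  move=> x; rewrite BE; apply: (iffP mulsgP).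
    by case=> c z hc /cycleP[m ->] ->; exists c => //; exists m.
  by case=> c hc [m ->]; exists c (a ^+ m)%g => //; apply: mem_cycle.
have CB : C \subset B by apply: joing_subl.
have aB : a \in B by apply/memBP; exists 0; [exact: mem0 | exists 1%N; rewrite add0r].
have exP : exists j, (0 < j)%N && (a *+ j \in C).
  by exists #|M|; rewrite cardM_gt0 mulrn_card mem0.
case: (ex_minnP exP) => k /andP[k0 akC] kmin.
have U : forall i j, (i < k)%N -> (j < k)%N -> a *+ i - a *+ j \in C -> i = j.
  move=> i j hi hj; wlog le : i j hi hj / (i <= j)%N.
    move=> W; case: (leqP i j) => [le|/ltnW le] h; first exact: W.
    by symmetry; apply: W => //; rewrite -opprB memN.
  move=> h; have hji : a *+ (j - i) \in C by rewrite mulrnBr // -opprB memN.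
  apply/eqP; rewrite eqn_leq le /= leqNgt; apply/negP => lij.
  have := kmin (j - i)%N; rewrite hji subn_gt0 lij => /(_ isT).
  by rewrite leqNgt ltn_subLR ?ltn_addl // ltnW.
have decomp : forall m, a *+ m = (a *+ k) *+ (m %/ k) + a *+ (m %% k).
  by move=> m; rewrite -mulrnA -mulrnDr mulnC -divn_eq.
have cardB : #|B| = (#|C| * k)%N.
  pose F (p : M * 'I_k) := p.1 + a *+ p.2.
  have -> : (B : {set M}) = F @: setX C [set: 'I_k].
    apply/setP => x; apply/memBP/imsetP.
      case=> c hc [m ->]; exists (c + (a *+ k) *+ (m %/ k), Ordinal (ltn_pmod m k0)).
        by rewrite !inE andbT; apply: memD => //; apply: memMn.
      by rewrite /F /= (decomp m) addrA.
    by case=> [[c j]]; rewrite inE /= => /andP[hc _] ->; exists c => //; exists j.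
  rewrite card_in_imset ?cardsX ?cardsT ?card_ord //.
  move=> [c1 j1] [c2 j2]; rewrite !inE /= => /andP[h1 _] /andP[h2 _].
  rewrite /F /= => e.
  have ej : val j1 = val j2.
    apply: U; [exact: ltn_ord | exact: ltn_ord |]; have -> : a *+ j1 - a *+ j2 = c2 - c1.
      by apply: (addrI c1); rewrite addrA e addrK addrC subrK.
    exact: memB.
  have ej' : j1 = j2 by apply: val_inj.
  by rewrite ej' in e *; rewrite (addIr _ e).
have NM : (#|M|.-1.+1 = #|M|)%N by rewrite prednK // cardM_gt0.
have aN : a *+ #|M|.-1.+1 = 0 by rewrite NM mulrn_card.
have kdvd : (k %| #|M|.-1.+1)%N.
  rewrite /dvdn; apply/eqP; set r := (_ %% k)%N.
  have hr : a *+ r \in C.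
    have := decomp #|M|.-1.+1; rewrite aN => e.
    have -> : a *+ r = - (a *+ k *+ (#|M|.-1.+1 %/ k)).
      by apply/eqP; rewrite -addr_eq0 addrC -e.
    by apply: memN; apply: memMn.
  case: (posnP r) => // r0; have := kmin r; rewrite r0 hr => /(_ isT).
  by rewrite leqNgt ltn_pmod.
pose hC := homs I C.
pose Pset := [set p : {ffun M -> Z} * Z | (p.1 \in hC) && (p.2 *+ k == p.1 (a *+ k))].
pose Phi (g : {ffun M -> Z}) := ([ffun x => if x \in C then g x else 0], g a).
have cardP : #|Pset| = (#|hC| * k)%N.
  rewrite -sum1_card (eq_bigl (fun p : {ffun M -> Z} * Z => (p.1 \in hC) && (p.2 *+ k == p.1 (a *+ k)))); last first.
    by move=> p; rewrite inE.
  rewrite -(pair_big_dep (fun f => f \in hC) (fun f (t : Z) => t *+ k == f (a *+ k)) (fun _ _ => 1%N)) /=.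
  rewrite (eq_bigr (fun _ => k)) ?sum_nat_const // => f /homsP[fa _ _].
  rewrite sum1dep_card count_sol //.
  have e : f (a *+ k) *+ (#|M|.-1.+1 %/ k) = 0.
    by rewrite -(homMn fa) // -mulrnA mulnC divnK // aN (hom0 fa).
  move: e; rewrite Zp_mulrn => /(congr1 val) /= /eqP.
  by rewrite -/(dvdn _ _).
have Phi_inj : {in homs I B &, injective Phi}.
  move=> g1 g2 /homsP[a1 _ o1] /homsP[a2 _ o2] [r a12]; apply/ffunP => x.
  case: (boolP (x \in B)) => hx; last by rewrite o1 ?o2.
  case/memBP: hx => c hc [m ->].
  have hcB : c \in B by apply: (subsetP CB).
  have hmB : a *+ m \in B by apply: memMn.
  rewrite a1 // a2 // (homMn a1) // (homMn a2) // a12.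
  by have := congr1 (fun h : {ffun M -> Z} => h c) r; rewrite !ffunE hc => ->.
have PhiE : Phi @: homs I B = Pset.
  apply/setP => -[f t]; apply/imsetP/idP.
    case=> g /homsP[ga gI go] [-> ->]; rewrite inE /=; apply/andP; split.
      apply/homsP; split.
      - move=> x y hx hy; rewrite !ffunE hx hy memD //.
        by rewrite ga // (subsetP CB).
      - by move=> x hx; rewrite ffunE (subsetP sIC) // gI.
      - by move=> x hx; rewrite ffunE (negPf hx).
    by rewrite ffunE akC (homMn ga).
  rewrite inE /= => /andP[/homsP[fa fI fo] /eqP ht].
  pose j x : nat := if [pick i : 'I_k | x - a *+ i \in C] is Some i then val i else 0%N.
  pose g := [ffun x => if x \in B then f (x - a *+ j x) + t *+ j x else 0].
  have gE : forall c m, c \in C -> g (c + a *+ m) = f c + t *+ m.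
    move=> c m hc; rewrite ffunE.
    have hx : c + a *+ m \in B by apply/memBP; exists c => //; exists m.
    have dec2 : forall i : nat, c + a *+ m - a *+ i = (c + (a *+ k) *+ (m %/ k)) + (a *+ (m %% k) - a *+ i).
      by move=> i; rewrite {1}(decomp m) !addrA.
    have hq : c + (a *+ k) *+ (m %/ k) \in C by apply: memD => //; apply: memMn.
    rewrite hx /j; case: pickP => [i /= hi | none]; last first.
      by have hn := none (Ordinal (ltn_pmod m k0)); rewrite /= dec2 subrr addr0 hq in hn.
    have rE : (m %% k)%N = i.
      apply: U; [exact: ltn_pmod | exact: ltn_ord |].
      by rewrite -(memDl _ hq) -dec2.
    rewrite -rE dec2 subrr addr0 fa //; last by apply: memMn.
    rewrite (homMn fa) // -ht -mulrnA -addrA -mulrnDr.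
    by rewrite [(k * _)%N]mulnC -divn_eq.
  exists g.
    apply/homsP; split.
    - move=> x y /memBP[c1 h1 [m1 ->]] /memBP[c2 h2 [m2 ->]].
      rewrite addrACA -mulrnDr !gE ?memD // fa // mulrnDr addrACA //.
    - move=> x hx; have hxC : x \in C by apply: (subsetP sIC).
      by have := gE x 0%N hxC; rewrite mulr0n !addr0 fI.
    - by move=> x hx; rewrite ffunE (negPf hx).
  congr pair.
    apply/ffunP => x; rewrite ffunE; case: ifP => hxC.
      by have := gE x 0%N hxC; rewrite mulr0n !addr0.
    by rewrite fo ?hxC.
  by have := gE 0 1%N (mem0 C); rewrite add0r mulr1n (hom0 fa) add0r.
rewrite cardB -(card_in_imset Phi_inj) PhiE cardP -IH.
by rewrite mulnAC.
Qed.


Lemma homs_all (I : {group M}) : (#|homs I [set: M]| * #|I| = #|M|)%N.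
Proof.
have base : #|homs I I| = 1%N.
  rewrite -(cards1 ([ffun => 0] : {ffun M -> Z})); apply: eq_card => f; rewrite in_set1.
  apply/homsP/eqP.
    case=> _ fI fo; apply/ffunP => x; rewrite ffunE.
    by case: (boolP (x \in I)) => hx; [exact: fI | exact: fo].
  by move=> ->; split => [x y _ _|x _|x _]; rewrite !ffunE ?addr0.
have gen : forall s : seq M, exists B : {group M},
    [/\ I \subset B, {subset s <= B} & (#|homs I B| * #|I| = #|B|)%N].
  elim=> [|a s [B [sIB sB IH]]].
    by exists I; split => //; rewrite base mul1n.
  exists (B <*> <[a]>)%G; split.
  - exact: subset_trans sIB (joing_subl _ _).
  - move=> x; rewrite inE => /orP[/eqP ->|hx].
      exact: subsetP (joing_subr _ _) _ (cycle_id a).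
    exact: subsetP (joing_subl _ _) _ (sB _ hx).
  - exact: homs_step.
have [B [_ sB IH]] := gen (enum M).
have BT : (B : {set M}) = [set: M].
  by apply/setP => x; rewrite inE; apply: sB; rewrite mem_enum.
by rewrite BT cardsT in IH.
Qed.


Lemma homB (B : {group M}) (f : {ffun M -> Z}) :
  {in B &, forall x y, f (x + y) = f x + f y} ->
  {in B &, forall x y, f (x - y) = f x - f y}.
Proof.
move=> h x y hx hy; apply/eqP; rewrite eq_sym subr_eq -h ?subrK //.
exact: memB.
Qed.

End Homs.

Section Mod.
Variables (gT : finGroupType) (M : finZmodType) (rho : gT -> M -> M) (H : {group gT}).
Hypothesis Hadd : forall h, h \in H -> forall x y, rho h (x + y) = rho h x + rho h y.
Hypothesis Hmul : forall g h, g \in H -> h \in H -> forall x, rho (g * h)%g x = rho g (rho h x).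

Lemma rho0 h : h \in H -> rho h 0 = 0.
Proof.
move=> hh; have := Hadd hh 0 0; rewrite addr0 => e.
by apply: (addrI (rho h 0)); rewrite addr0 -e.
Qed.

Lemma rhoN h x : h \in H -> rho h (- x) = - rho h x.
Proof.
move=> hh; apply/eqP; rewrite -addr_eq0 -Hadd // addNr rho0 //.
Qed.

Lemma rhoB h x y : h \in H -> rho h (x - y) = rho h x - rho h y.
Proof. by move=> hh; rewrite Hadd // rhoN. Qed.

Lemma rho_sum h (I : finType) (P : pred I) (F : I -> M) : h \in H ->
  rho h (\sum_(i | P i) F i) = \sum_(i | P i) rho h (F i).
Proof.
move=> hh; elim/big_rec2: _ => [|i y1 y2 _ <-]; first exact: rho0.
by rewrite Hadd.
Qed.

Local Notation Nf := (fun m => \sum_(h in H) rho h m).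

Lemma Nadd x y : Nf (x + y) = Nf x + Nf y.
Proof.
by rewrite /= -big_split /=; apply: eq_bigr => h hh; rewrite Hadd.
Qed.

Lemma fixM_group : group_set (fixM rho H).
Proof.
apply/group_setP; split.
  by rewrite inE; apply/forallP => h; apply/implyP => hh; rewrite rho0.
move=> x y; rewrite !inE => /forall_inP hx /forall_inP hy.
apply/forall_inP => h hh; rewrite [(x * y)%g]/= Hadd //.
by rewrite (eqP (hx h hh)) (eqP (hy h hh)).
Qed.

Lemma normker_group : group_set (normker rho H).
Proof.
apply/group_setP; split.
  by rewrite inE big1 // => h hh; rewrite rho0.
move=> x y; rewrite !inE => /eqP hx /eqP hy.
by rewrite [(x * y)%g]/= (Nadd x y) /= hx hy addr0.
Qed.

Lemma normimg_group : group_set (normimg rho H).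
Proof.
apply/group_setP; split.
  by apply/imsetP; exists 0 => //; rewrite big1 // => h hh; rewrite rho0.
move=> x y /imsetP[m _ ->] /imsetP[m' _ ->]; apply/imsetP; exists (m + m') => //.
by rewrite (Nadd m m').
Qed.

Lemma normimg_sub : normimg rho H \subset fixM rho H.
Proof.
apply/subsetP => x /imsetP[m _ ->]; rewrite inE; apply/forall_inP => g hg.
rewrite rho_sum //; apply/eqP.
rewrite [RHS](reindex_inj (mulgI g)) /=; apply: eq_big => h.
  by rewrite groupMl.
by move=> hh; rewrite Hmul.
Qed.

Lemma augM_sub : augM rho H \subset normker rho H.
Proof.
rewrite /augM; have -> : normker rho H = Group normker_group by [].
rewrite gen_subG; apply/subsetP => x /imset2P[g m hg _ ->] /=.
rewrite inE.
have e : \sum_(h in H) rho h (rho g m - m) =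
         \sum_(h in H) rho (h * g)%g m - \sum_(h in H) rho h m.
  by rewrite -sumrB; apply: eq_bigr => h hh; rewrite rhoB // Hmul.
rewrite e (reindex_inj (mulIg g^-1)%g) /=.
rewrite (eq_big (fun h => h \in H) (fun h => rho h m)) ?subrr // => h.
  by rewrite groupMr // groupV.
by rewrite mulgKV.
Qed.


Lemma card_ker_img : (#|normker rho H| * #|normimg rho H| = #|M|)%N.
Proof.
pose nf : {morphism [set: M]%G >-> M} :=
  @Morphism M M [set: M] (fun m => \sum_(h in H) rho h m) (in2W Nadd).
have im : (nf @* [set: M])%g = normimg rho H.
  rewrite morphimEdom; apply/setP => y; apply/imsetP/imsetP; case=> m _ ->; by exists m.
have ke : ('ker nf)%g = normker rho H.
  by apply/setP => x; rewrite !inE /=.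
have := card_morphim nf [set: M]%G; rewrite im setIid -ke => ->.
by have := Lagrange (subsetT (gval ('ker nf)%G)); rewrite cardsT.
Qed.


Lemma card_hm1 : (hhatm1 rho H * #|augM rho H| = #|normker rho H|)%N.
Proof.
rewrite /hhatm1 /tateHm1 card_quotient; last first.
  by apply: sub_abelian_norm (zmod_abelian _) augM_sub.
by rewrite mulnC (@Lagrange _ (Group normker_group)) // augM_sub.
Qed.

Lemma card_h0 : (hhat0 rho H * #|normimg rho H| = #|fixM rho H|)%N.
Proof.
rewrite /hhat0 /tateH0 (@card_quotient _ (Group normimg_group)); last first.
  by apply: sub_abelian_norm (zmod_abelian _) normimg_sub.
by rewrite mulnC (@Lagrange _ (Group fixM_group) (Group normimg_group)) // normimg_sub.
Qed.

Lemma dual_eq : dual_fix rho H = homs (augM rho H) [set: M].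
Proof.
apply/setP => f; rewrite [in LHS]inE; apply/idP/homsP.
  case/andP => /forallP hom /forall_inP inv.
  have fa : {in [set: M]%G &, forall x y, f (x + y) = f x + f y}.
    by move=> x y _ _; apply/eqP; have := forallP (hom x) y.
  split => //; last by move=> x; rewrite inE.
  have Kg : group_set [set x : M | f x == 0].
    apply/group_setP; split; first by rewrite inE (hom0 fa).
    by move=> x y; rewrite !inE => /eqP hx /eqP hy; rewrite [(x * y)%g]/= fa ?inE // hx hy addr0.
  have : augM rho H \subset Group Kg.
    rewrite /augM gen_subG; apply/subsetP => x /imset2P[g m hg _ ->].
    rewrite inE (homB fa) ?inE //.
    have := inv g^-1%g; rewrite groupV invgK => /(_ hg) /forallP /(_ m) /eqP ->.
    by rewrite subrr.
  by move=> sub x /(subsetP sub); rewrite inE => /eqP.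
case=> fa fI _; apply/andP; split.
  by apply/forallP => x; apply/forallP => y; rewrite fa ?inE.
apply/forall_inP => h hh; apply/forallP => m.
have hI : rho h^-1%g m - m \in augM rho H.
  by apply: mem_gen; apply/imset2P; exists h^-1%g m; rewrite ?groupV ?inE.
have := fI _ hI; rewrite (homB (B := [set: M]%G)) ?inE //.
by move/eqP; rewrite subr_eq0.
Qed.

End Mod.

Lemma sqz (x : rat) (n : int) : (x ^+ 2) ^ n = (x ^ n) ^+ 2.
Proof. by rewrite !expr2 expfzMl. Qed.

Lemma rat_id (F D p q : nat) (n : int) : (0 < F)%N -> (0 < q)%N -> (D * q = p * F)%N ->
  ((F%:R^-1) ^+ 2) ^ n * ((((D%:R : rat)^-1) ^+ 2) ^ n)^-1 = (p%:R ^ n * (q%:R ^ n)^-1) ^+ 2.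
Proof.
move=> F0 q0 e.
have a0 : (F%:R : rat) != 0 by rewrite pnatr_eq0 -lt0n.
have b0 : (q%:R : rat) != 0 by rewrite pnatr_eq0 -lt0n.
have eq : (D%:R : rat) = p%:R * F%:R / q%:R.
  by rewrite -natrM -e natrM mulfK.
rewrite !sqz eq -!expfV !expfzMl -expfV.
have A0 : (F%:R : rat) ^ n != 0 by rewrite expfz_eq0 negb_and a0 orbT.
have Q0 : (q%:R : rat) ^ n != 0 by rewrite expfz_eq0 negb_and b0 orbT.
move: A0 Q0; set A := _ ^ n; set Q := _ ^ n; set P := _ ^ n => A0 Q0.
rewrite [X in _ / X]exprVn invrK.
by field; rewrite A0 Q0.
Qed.

Theorem mainTheorem6 (gT : finGroupType) (G : {group gT}) (n : {group gT} -> int)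
    (M : finZmodType) (rho : gT -> M -> M) :
  is_brauer_relation G n ->
  is_ZG_module G rho ->
  regconst_fin rho G n / regconst_dual rho G n =
  (hhatm1_rel rho G n / hhat0_rel rho G n) ^+ 2.
Proof.
move=> _ [hadd _ hmul].
rewrite /regconst_fin /regconst_dual /hhatm1_rel /hhat0_rel -!prodfV -!big_split /= -prodrXl.
apply: eq_bigr => H sHG.
have Hadd : forall h, h \in H -> forall x y, rho h (x + y) = rho h x + rho h y.
  by move=> h hh; apply: hadd; apply: (subsetP sHG).
have Hmul : forall g h, g \in H -> h \in H -> forall x, rho (g * h)%g x = rho g (rho h x).
  by move=> g h hg hh; apply: hmul; apply: (subsetP sHG).
have F0 : (0 < #|fixM rho H|)%N.
  by apply/card_gt0P; exists 0; apply: (group1 (Group (fixM_group Hadd))).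
have I0 : (0 < #|augM rho H|)%N by apply/card_gt0P; exists 0; apply: group1.
have N0 : (0 < #|normimg rho H|)%N.
  by apply/card_gt0P; exists 0; apply: (group1 (Group (normimg_group Hadd))).
have hq := card_h0 Hadd Hmul.
have hp := card_hm1 Hadd Hmul.
have hk := card_ker_img Hadd.
have hd : (#|dual_fix rho H| * #|augM rho H| = #|M|)%N.
  by rewrite dual_eq; apply: (homs_all [group of augM rho H]).
apply: rat_id => //.
  by move: F0; rewrite -hq muln_gt0 => /andP[].
apply/eqP; rewrite -(@eqn_pmul2r (#|augM rho H| * #|normimg rho H|)) ?muln_gt0 ?I0 ?N0 //.
rewrite mulnACA hd hq mulnACA hp mulnCA hk mulnC //.
Qed.
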